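(* Let $k \ge 2$ and $q \ge 0$ be integers with $k$ even, and let $s \in \{0,1\}$ be the unique integer satisfying $s \equiv q + \frac{k-2}{2} \pmod 2$. Then, for any integer $n$ such that \[n \ge \max\left\{k, \frac{k^2}{4} + \frac{q-s}{2}k+s\right\}\] and any function $f:[n]\to \{-1,1\}$ with $|f([n])| \le q$, there is a $k$-block $B\subseteq[n]$ with $f(B)=0$.
   Context: $[n]=\{1,\dots,n\}$; $f(Y)=\sum_{y\in Y}f(y)$; a $k$-block is a set of $k$ consecutive integers. *)

(* Defs.v *)
From mathcomp Require Import all_boot all_order all_algebra.
Set Implicit Arguments. Unset Strict Implicit. Unset Printing Implicit Defensive.
Import Order.TTheory GRing.Theory Num.Theory.
(* f(Y) = sum_{y in Y} f(y); [n] = {1,...,n}; a k-block is {a, ..., a+k-1}. *)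

(* Main.v *)
Require Import Defs.
From mathcomp Require Import all_boot all_order all_algebra.
From mathcomp Require Import zify ring lra.
Import Order.TTheory GRing.Theory Num.Theory.
Local Open Scope ring_scope.

Lemma arith (m t r q s n x y z : int) : 1 <= m -> 0 <= t -> 0 <= r -> r < 2 * m ->
  n = 2 * m * t + r -> 2 * t - r <= x -> 2 * t + r - 2 * m + 2 <= x -> x <= q ->
  x = n - 2 * y -> 0 <= s <= 1 -> q + m - 1 = s + 2 * z -> m * m + q * m + s <= n + s * m -> False.
Proof.
move=> m1 t0 r0 r2m hn hx1 hx2 hxq hy /andP[s0 s1] hz hN.
have h1 : m * (2 * t) <= m * (x + r) by rewrite ler_pM2l; lia.
have h2 : m * (2 * t) <= m * (x + 2 * m - 2 - r) by rewrite ler_pM2l; lia.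
have hq : m * x <= m * q by rewrite ler_pM2l; lia.
have hsm1 : 0 <= (1 - s) * m by apply: mulr_ge0; lia.
have hsm2 : 0 <= s * m by apply: mulr_ge0; lia.
have hsm3 : s = 0 \/ s = 1 by lia.
have e1 : 2 * m * t = m * (2 * t) by ring.
rewrite e1 in hn.
case: (lerP r (m-1)) => hr.
- have hA : 0 <= (m+1)*(m-1-r) by apply: mulr_ge0; lia.
  case: (lerP x (q-1)) => hx.
  + have hq' : m * x <= m * (q - 1) by rewrite ler_pM2l; lia.
    lia.
  + have xq : x = q by lia.
    case: (lerP s 0) => hs; first lia.
    have hr2 : r <= m - 2.
      have e2 : m * (2 * t) = 2 * (m * t) by ring.
      rewrite e2 in hn; move: (m * t) hn => u hn; lia.
    have hA2 : 0 <= (m+1)*(m-2-r) by apply: mulr_ge0; lia.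
    lia.
- have hB : 0 <= (m-1)*(r-m) by apply: mulr_ge0; lia.
  case: hsm3 => hs01; rewrite hs01 in hN; lia.
Qed.

Section S.
Variables (S : nat -> int) (n : nat).
Hypothesis S0 : S 0%N = 0.
Hypothesis Sstep : forall i, (i < n)%N -> S i.+1 = S i + 1 \/ S i.+1 = S i - 1.

Lemma parity_S i : (i <= n)%N -> exists y : int, S i = i%:Z - 2 * y.
Proof.
elim: i => [|i IH] hi; first by exists 0; rewrite S0; lia.
have [y hy] := IH (ltnW hi).
case: (Sstep i hi) => ->; [exists y | exists (y + 1)]; lia.
Qed.

Lemma lip_S d i : (i + d <= n)%N -> S (i + d) - S i <= d%:Z /\ - d%:Z <= S (i + d) - S i.
Proof.
elim: d => [|d IH] h; first by rewrite addn0; lia.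
have hh : (i + d < n)%N by rewrite addnS in h.
have [h1 h2] := IH (ltnW hh).
rewrite addnS; case: (Sstep (i + d) hh); lia.
Qed.

Lemma sign_S k m : k = (2 * m)%N ->
  (forall i, (i + k <= n)%N -> S (i + k) - S i != 0) -> 0 < S k - S 0 ->
  forall i, (i + k <= n)%N -> 0 < S (i + k) - S i.
Proof.
move=> hk hnz h0; elim=> [|i IH] hi; first by rewrite add0n.
have hi' : (i + k <= n)%N by lia.
have h1 := IH hi'.
have [y1 hy1] := parity_S _ hi'.
have hi2 : (i <= n)%N by lia.
have [y2 hy2] := parity_S i hi2.
have hs1 : (i + k < n)%N by lia.
have hs2 : (i < n)%N by lia.
have := hnz i.+1 hi; rewrite addSn.
case: (Sstep _ hs1) => ->; case: (Sstep _ hs2) => ->; lia.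
Qed.

Lemma blocks_S k : (forall i, (i + k <= n)%N -> 2 <= S (i + k) - S i) ->
  forall j r, (r + k * j <= n)%N -> S r + 2 * j%:Z <= S (r + k * j).
Proof.
move=> H; elim=> [|j IH] r h; first by rewrite muln0 addn0; lia.
have e : (r + k * j.+1 = (r + k * j) + k)%N by rewrite mulnS addnCA addnC.
rewrite e in h *.
have h' : (r + k * j <= n)%N by apply: leq_trans (leq_addr k _) h.
have := IH r h'; have := H _ h; lia.
Qed.

Lemma core_pos k m q s : k = (2 * m)%N -> (1 <= m)%N -> (k <= n)%N ->
  (forall i, (i + k <= n)%N -> 0 < S (i + k) - S i) ->
  S n <= q%:Z -> (s <= 1)%N -> s = ((q + m - 1) %% 2)%N ->
  (m * m + q * m + s <= n + s * m)%N -> False.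
Proof.
move=> hk hm hkn hpos hSq hs1 hs hN.
have h2 : forall i, (i + k <= n)%N -> 2 <= S (i + k) - S i.
  move=> i hi; have := hpos i hi.
  have [y1 hy1] := parity_S _ hi.
  have hi2 : (i <= n)%N by lia.
  have [y2 hy2] := parity_S _ hi2.
  lia.
have hk0 : (0 < k)%N by lia.
have hn : n = (n %% k + k * (n %/ k))%N by rewrite {1}(divn_eq n k) addnC mulnC.
have hb := blocks_S k h2 (n %/ k) (n %% k) (eq_leq (esym hn)).
rewrite -hn in hb.
have hr : (n %% k < k)%N by rewrite ltn_pmod.
have hr0 : (0 + n %% k <= n)%N by lia.
have [l1 l2] := lip_S (n %% k) 0 hr0.
rewrite add0n S0 in l1 l2.
have hrk : (n %% k + (k - n %% k) <= n)%N by lia.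
have [l3 l4] := lip_S (k - n %% k) (n %% k) hrk.
rewrite subnKC in l3 l4; last by lia.
have hk0p : (0 + k <= n)%N by rewrite add0n.
have hk2 := h2 0%N hk0p.
rewrite add0n S0 in hk2.
have [y hy] := parity_S _ (leqnn n).
apply: (@arith m%:Z (n %/ k)%:Z (n %% k)%:Z q%:Z s%:Z n%:Z (S n) y ((q + m - 1) %/ 2)%:Z).
all: try lia.
Qed.
End S.

Lemma core_all (S : nat -> int) n k m q s : S 0%N = 0 ->
  (forall i, (i < n)%N -> S i.+1 = S i + 1 \/ S i.+1 = S i - 1) ->
  k = (2 * m)%N -> (1 <= m)%N -> (k <= n)%N ->
  (forall i, (i + k <= n)%N -> S (i + k) - S i != 0) ->
  `|S n| <= q%:Z -> (s <= 1)%N -> s = ((q + m - 1) %% 2)%N ->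
  (m * m + q * m + s <= n + s * m)%N -> False.
Proof.
move=> S0 Sst hk hm hkn hnz hq hs1 hs hN.
case: (ltrP 0 (S k - S 0%N)) => h.
  apply: (@core_pos S n S0 Sst k m q s hk hm hkn (@sign_S S n S0 Sst k m hk hnz h) _ hs1 hs hN).
  by have := ler_norm (S n); lia.
have S0' : (fun i => - S i) 0%N = 0 by rewrite /= S0 oppr0.
have Sst' : forall i, (i < n)%N -> (fun i => - S i) i.+1 = (fun i => - S i) i + 1 \/
   (fun i => - S i) i.+1 = (fun i => - S i) i - 1.
  by move=> i hi /=; case: (Sst i hi) => ->; [right|left]; ring.
have hnz' : forall i, (i + k <= n)%N -> (fun i => - S i) (i + k) - (fun i => - S i) i != 0.
  move=> i hi /=; have := hnz i hi; lia.
have h' : 0 < (fun i => - S i) k - (fun i => - S i) 0%N.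
  have H0 : S k - S 0%N != 0 := hnz 0%N hkn.
  rewrite /=; lia.
apply: (@core_pos _ n S0' Sst' k m q s hk hm hkn (@sign_S _ n S0' Sst' k m hk hnz' h') _ hs1 hs hN).
rewrite /=; have := ler_norm (- S n); rewrite normrN; lia.
Qed.

Local Close Scope ring_scope.

Theorem corollary2p3 (k q s n : nat) (f : nat -> int) :
  2 <= k -> ~~ odd k ->
  s <= 1 -> s = q + (k - 2) %/ 2 %[mod 2] ->
  k <= n ->
  (((k ^ 2)%:R / 4 + ((q%:R - s%:R) / 2) * k%:R + s%:R)%R <= (n%:R : rat))%R ->
  (forall i, 1 <= i <= n -> f i = 1%R \/ f i = (-1)%R) ->
  (`| \sum_(1 <= i < n.+1) f i | <= q%:R)%R ->
  exists a : nat, [/\ 1 <= a, a + k - 1 <= n & (\sum_(a <= i < a + k) f i = 0)%R].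
Proof.
move=> hk2 hodd hs1 hs hkn hrat hf hsum.
have hdv : (2 %| k)%N by rewrite dvdn2.
set m := (k %/ 2)%N.
have hk : k = (2 * m)%N by rewrite /m; lia.
have hm : (1 <= m)%N by lia.
have hs' : s = ((q + m - 1) %% 2)%N.
  rewrite /m; move: hs; rewrite modn_small; last by lia.
  lia.
have hN : (m * m + q * m + s <= n + s * m)%N.
  have e : ((m * m + q * m + s)%:R : rat)%R =
     ((k ^ 2)%:R / 4 + ((q%:R - s%:R) / 2) * k%:R + s%:R + (s * m)%:R)%R.
    by rewrite hk !natrD !natrM; field.
  rewrite -(@ler_nat rat) e natrD; lra.
pose S := fun i => (\sum_(1 <= j < i.+1) f j)%R.
have S0 : S 0%N = 0%R by rewrite /S big_geq.
have Sst : forall i, (i < n)%N -> S i.+1 = (S i + 1)%R \/ S i.+1 = (S i - 1)%R.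
  move=> i hi; rewrite /S big_nat_recr //=.
  have : (1 <= i.+1 <= n)%N by rewrite ltnS leq0n.
  by move/hf => [] ->; [left|right].
have hw : forall i, (\sum_(i.+1 <= j < i.+1 + k) f j = S (i + k) - S i)%R.
  move=> i; rewrite /S (@big_cat_nat _ _ _ i.+1 1 (i + k).+1) //=; last by rewrite ltnS leq_addr.
  by rewrite addSn addrAC subrr add0r.
case: (boolP [exists i : 'I_n.+1, (i + k <= n)%N && (S (i + k)%N - S i == 0)%R]).
  move/existsP => [i /andP [h1 /eqP h2]].
  exists i.+1; split; [done | lia | by rewrite hw h2].
rewrite negb_exists => /forallP H; exfalso.
apply: (@core_all S n k m q s S0 Sst hk hm hkn _ _ hs1 hs' hN).
  move=> i hi.
  have hi' : (i < n.+1)%N by lia.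
  by have := H (Ordinal hi'); rewrite /= hi.
by rewrite -natz.
Qed.
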